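(* If $M_G$ is a connected mixed graph whose matrix $N(M_G)$ has rank $2$, then its underlying graph $G$ is a complete bipartite graph.
   Context: A mixed graph $M_G$ is obtained from a finite simple graph $G$ (its underlying graph) by orienting the edges of some subset of $E(G)$; it is connected if $G$ is. With $\omega=\frac{1+\mathbf{i}\sqrt3}{2}$, $N(M_G)$ has $(u,v)$-entry $\omega$ if $\overrightarrow{uv}$ is an arc, $\bar\omega$ if $\overrightarrow{vu}$ is an arc, $1$ for an undirected edge $\{u,v\}$, $0$ otherwise. *)

(* Defs.v *)
From mathcomp Require Import all_boot all_order all_algebra all_field.
Set Implicit Arguments. Unset Strict Implicit. Unset Printing Implicit Defensive.
Import Order.TTheory GRing.Theory Num.Theory.
Local Open Scope ring_scope.

Definition simple_graph (n : nat) (adj : rel 'I_n) : Prop :=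
  symmetric adj /\ irreflexive adj.

(* A mixed graph: a simple graph [adj] together with a set of arcs [arc];
   arc u v means the edge {u,v} is oriented from u to v. *)
Definition mixed_graph (n : nat) (adj arc : rel 'I_n) : Prop :=
  simple_graph adj /\
  (forall u v, arc u v -> adj u v) /\
  (forall u v, arc u v -> ~~ arc v u).

Definition connected_graph (n : nat) (adj : rel 'I_n) : Prop :=
  forall u v, connect adj u v.

Definition omega6 : algC := (1 + 'i * sqrtC 3%:R) / 2%:R.

Definition Nmat (n : nat) (adj arc : rel 'I_n) : 'M[algC]_n :=
  \matrix_(u, v)
    (if arc u v then omega6
     else if arc v u then omega6^*
     else if adj u v then 1 else 0).

Definition complete_bipartite (n : nat) (adj : rel 'I_n) : Prop :=
  exists A : {set 'I_n},
    [/\ A != set0, ~: A != set0 &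
        forall u v, adj u v = ((u \in A) != (v \in A))].

(* Main.v *)
Require Import Defs.
From mathcomp Require Import all_boot all_order all_algebra all_field.
From mathcomp Require Import ring.
Import Order.TTheory GRing.Theory Num.Theory.
Local Open Scope ring_scope.

Lemma det3 (R : comNzRingType) (A : 'M[R]_3) : \det A =
  A 0 0 * (A 1 1 * A 2 2 - A 1 2 * A 2 1)
  - A 0 1 * (A 1 0 * A 2 2 - A 1 2 * A 2 0)
  + A 0 2 * (A 1 0 * A 2 1 - A 1 1 * A 2 0).
Proof.
pose a (i j : nat) := A (inord i) (inord j).
have Ha : forall x y, A x y = a (val x) (val y) by move=> x y; rewrite /a !inord_val.
rewrite (expand_det_row _ 0) !big_ord_recl big_ord0 /cofactor.
rewrite !(expand_det_row _ 0) !big_ord_recl !big_ord0 /cofactor !det_mx11 !mxE !Ha /=.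
rewrite /bump /= !addn0 !add0n (_ : (1 %% 3 = 1)%N) // (_ : ((1+1) %% 3 = 2)%N) //.
rewrite !addn1 !expr0 !expr1 expr2.
ring.
Qed.

Definition good (e : algC) := e * e^* = 1 /\ e ^+ 6 = 1.

Lemma omega_conj : omega6^* = (1 - 'i * sqrtC 3%:R) / 2%:R.
Proof.
rewrite /omega6 fmorph_div rmorphD rmorphM rmorph1 /= conjCi rmorph_nat.
rewrite (geC0_conj (x := sqrtC _)) ?sqrtC_ge0 ?ler0n //.
by rewrite mulNr.
Qed.

Lemma omega_sum : omega6 + omega6^* = 1.
Proof.
rewrite omega_conj /omega6.
have h2 : (2%:R : algC) != 0 by rewrite pnatr_eq0.
by field.
Qed.

Lemma omega_norm : omega6 * omega6^* = 1.
Proof.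
rewrite omega_conj /omega6.
have h2 : (2%:R : algC) != 0 by rewrite pnatr_eq0.
have ht : ('i * sqrtC 3%:R) ^+ 2 = - 3%:R :> algC.
  by rewrite exprMn sqrCi sqrtCK mulN1r.
apply: (@mulIf _ (2%:R * 2%:R)); first by rewrite mulf_neq0.
rewrite mul1r.
have -> : (1 + 'i * sqrtC 3%:R) / 2%:R * ((1 - 'i * sqrtC 3%:R) / 2%:R)
          * (2%:R * 2%:R) = 1 - ('i * sqrtC 3%:R) ^+ 2 :> algC by field.
rewrite ht opprK.
by rewrite -natrM addrC natr1.
Qed.

Lemma good_omega : good omega6.
Proof.
split; first exact: omega_norm.
have h2 : omega6 ^+ 2 = omega6 - 1.
  have hc : omega6^* = 1 - omega6 by rewrite -omega_sum; ring.
  rewrite -omega_norm hc; ring.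
have h3 : omega6 ^+ 3 = - 1.
  rewrite exprS h2 mulrBr mulr1 -expr2 h2; ring.
by rewrite (_ : 6 = 3 * 2)%N // exprM h3 sqrrN expr1n.
Qed.

Lemma good1 : good 1.
Proof. by split; rewrite ?rmorph1 ?mulr1 ?expr1n. Qed.

Lemma good_conj e : good e -> good e^*.
Proof.
case=> h1 h2; split; first by rewrite conjCK mulrC.
by rewrite -rmorphXn h2 rmorph1.
Qed.

Lemma good_mul a b : good a -> good b -> good (a * b).
Proof.
case=> a1 a2 [b1 b2]; split; last by rewrite exprMn a2 b2 mulr1.
rewrite rmorphM /=.
have -> : a * b * (a^* * b^*) = (a * a^*) * (b * b^*) by ring.
by rewrite a1 b1 mulr1.
Qed.

Lemma good_neq0 e : good e -> e != 0.
Proof. by case=> h _; apply/eqP => e0; move: h; rewrite e0 mul0r => /eqP; rewrite eq_sym oner_eq0. Qed.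

Lemma good_sum z : good z -> z + z^* != 0.
Proof.
case=> h1 h6; apply/eqP => hz.
have hz2 : z ^+ 2 = -1.
  have : z * (z + z^*) = 0 by rewrite hz mulr0.
  rewrite mulrDr h1 expr2 => /eqP; rewrite addr_eq0 => /eqP //.
move: h6; rewrite (_ : 6 = 2 * 3)%N // exprM hz2 exprS sqrrN expr1n mulr1 => h.
have : (2%:R : algC) == 0 by rewrite -[2%:R]/(1 + 1 : algC) -{1}h addNr.
by rewrite pnatr_eq0.
Qed.

Section Graph.
Variables (n : nat) (adj arc : rel 'I_n).
Hypothesis Hmg : mixed_graph adj arc.
Hypothesis Hr : \rank (Nmat adj arc) = 2%N.

Let N := Nmat adj arc.

Lemma adj_sym u v : adj u v = adj v u.
Proof. by case: Hmg => [[s _] _]; apply: s. Qed.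

Lemma adj_irr u : adj u u = false.
Proof. by case: Hmg => [[_ i] _]; apply: i. Qed.

Lemma N0 {u v} : ~~ adj u v -> N u v = 0.
Proof.
move=> h; rewrite /N /Nmat mxE.
case: Hmg => _ [ha _].
have -> : arc u v = false by apply/negP => /ha; apply/negP.
have -> : arc v u = false by apply/negP => /ha; rewrite adj_sym; apply/negP.
by rewrite (negbTE h).
Qed.

Lemma Ngood {u v} : adj u v -> good (N u v).
Proof.
move=> h; rewrite /N /Nmat mxE.
case: (arc u v); first exact: good_omega.
case: (arc v u); first exact: good_conj good_omega.
by rewrite h; exact: good1.
Qed.

Lemma Nconj u v : N v u = (N u v)^*.
Proof.
rewrite /N /Nmat !mxE.
case: Hmg => _ [ha hanti].
case E1: (arc u v).
  by have -> : arc v u = false by apply/negbTE/hanti; rewrite E1.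
case E2: (arc v u); first by rewrite conjCK.
by rewrite adj_sym; case: (adj u v); rewrite ?rmorph1 ?rmorph0.
Qed.

Lemma rank_sub k (f g : 'I_k -> 'I_n) : (\rank (mxsub f g N) <= 2)%N.
Proof.
rewrite -Hr -[N in mxsub _ _ N]mul1mx mxsub_mul.
apply: leq_trans (mxrankM_maxr _ _) _.
rewrite -[N in colsub _ N]mulmx1 -mulmx_colsub.
exact: mxrankM_maxl.
Qed.

Lemma subE k (f g : 'I_k -> 'I_n) i j : mxsub f g N i j = N (f i) (g j).
Proof. by rewrite mxE. Qed.

Lemma det3_contra (f g : 'I_3 -> 'I_n) : \det (mxsub f g N) != 0 -> False.
Proof.
move=> h; have := @rank_sub 3 f g.
rewrite mxrank_unit //; rewrite unitmxE unitfE //.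
Qed.

Lemma no_triangle u v w : adj u v -> adj v w -> adj u w -> False.
Proof.
move=> huv hvw huw.
pose f (i : 'I_3) := nth u [:: u; v; w] i.
apply: (@det3_contra f f).
rewrite det3 !subE /f /=.
rewrite !(N0 (negbT (adj_irr _))) (Nconj u v) (Nconj u w) (Nconj v w).
set a := N u v; set b := N u w; set c := N v w.
have -> : 0 * (0 * 0 - c * c^*) - a * (a^* * 0 - c * b^*) + b * (a^* * c^* - 0 * b^*)
   = (a * c * b^*) + (a * c * b^*)^*.
  rewrite !rmorphM /= conjCK; ring.
apply: good_sum; apply: good_mul; first exact: good_mul (Ngood huv) (Ngood hvw).
exact: good_conj (Ngood huw).
Qed.

Lemma no_P4 x y z t : adj x y -> adj y z -> adj z t ->
  ~~ adj x z -> ~~ adj x t -> ~~ adj y t -> False.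
Proof.
move=> hxy hyz hzt nxz nxt nyt.
pose f (i : 'I_3) := nth x [:: x; y; z] i.
pose g (i : 'I_3) := nth x [:: y; z; t] i.
apply: (@det3_contra f g).
rewrite det3 !subE /f /g /=.
rewrite !(N0 (negbT (adj_irr _))) (N0 nxz) (N0 nxt) (N0 nyt).
rewrite !mul0r subr0 !addr0 subr0.
rewrite !mulf_neq0 //; apply: good_neq0; [exact: (Ngood hxy)|exact: (Ngood hyz)|exact: (Ngood hzt)].
Qed.

Hypothesis Hc : connected_graph adj.

Lemma exists_edge : exists u v, adj u v.
Proof.
case: (boolP [exists u, [exists v, adj u v]]) => [/existsP[u /existsP[v h]]|hne].
  by exists u, v.
have hN : N = 0.
  apply/matrixP => u v; rewrite [RHS]mxE; apply: N0; apply/negP => h.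
  by move/negP: hne; apply; apply/existsP; exists u; apply/existsP; exists v.
by move: Hr; rewrite -/N hN mxrank0.
Qed.

Lemma main_sec : complete_bipartite adj.
Proof.
have [u [v huv]] := exists_edge.
have tri := no_triangle.
have p4 := no_P4.
have cover : forall z, adj u z || adj v z.
  pose S := [pred z | adj u z || adj v z].
  have clS : closed adj S.
    apply: intro_closed; first exact: sym_connect_sym adj_sym.
    move=> x y hxy; rewrite !inE.
    case hy: (adj u y || adj v y) => //.
    move/norP: hy => [nuy nvy].
    case/orP => hx.
    - exfalso; apply: (p4 y x u v).
      + by rewrite adj_sym.
      + by rewrite adj_sym.
      + done.
      + by rewrite adj_sym.
      + by rewrite adj_sym.
      + by apply/negP => hxv; apply: (tri u x v).
    - exfalso; apply: (p4 y x v u).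
      + by rewrite adj_sym.
      + by rewrite adj_sym.
      + by rewrite adj_sym.
      + by rewrite adj_sym.
      + by rewrite adj_sym.
      + by apply/negP => hxu; apply: (tri u x v) => //; rewrite adj_sym.
  move=> z; have := closed_connect clS (Hc u z).
  by rewrite !inE /= adj_irr adj_sym huv => <-.
exists [set x | adj v x]; split.
- by apply/set0Pn; exists u; rewrite inE adj_sym.
- by apply/set0Pn; exists v; rewrite !inE adj_irr.
have key : forall x y, adj v x -> ~~ adj v y -> adj x y.
  move=> x y hvx nvy; have := cover y; rewrite (negbTE nvy) orbF => huy.
  apply/negPn/negP => nxy; apply: (p4 x v u y) => //.
  + by rewrite adj_sym.
  + by rewrite adj_sym.
  + by apply/negP => hxu; apply: (tri u x v) => //; rewrite adj_sym.
move=> x y; rewrite !inE.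
case hx: (adj v x); case hy: (adj v y) => /=.
- by apply/negP => hxy; apply: (tri v x y).
- by apply: key => //; rewrite hy.
- by rewrite adj_sym; apply: key => //; rewrite hx.
- apply/negP => hxy; have := cover x; have := cover y.
  rewrite hx hy !orbF => huy hux; exact: (tri u x y).
Qed.

End Graph.

Theorem theorem5p7 (n : nat) (adj arc : rel 'I_n) :
  mixed_graph adj arc -> connected_graph adj ->
  \rank (Nmat adj arc) = 2%N ->
  complete_bipartite adj.
Proof. by move=> Hmg Hc Hr; exact: (@main_sec n adj arc Hmg Hr Hc). Qed.
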